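(* Let $G=(V,E)$ be a finite connected graph with $n=|V|$, and consider the edge-averaging process $(f_t)_{t\ge0}$ on $G$ started from an arbitrary (deterministic) function $f_0:V\to[-1,1]$. Then for every $\varepsilon>0$ and every $t>0$, $$\mathbb{P}(\tau_\varepsilon>t)\le\frac{2n}{\varepsilon^2}\exp(-2t/n^2).$$
   Context: Edge-averaging process: each vertex $v\in V$ carries an opinion $f_t(v)\in\mathbb R$ at each time $t\ge 0$. Each edge carries an independent rate-one Poisson clock. When the clock of edge $\{u,v\}$ rings at time $t$, both endpoints update to $f_t(u)=f_t(v)=\frac{f_{t-}(u)+f_{t-}(v)}{2}$, where $f_{t-}(u)=\lim_{s\uparrow t}f_s(u)$; other opinions are unchanged. For $f:V\to\mathbb R$, $\mathrm{osc}(f):=\sup_{u,v\in V}|f(u)-f(v)|$, and $\tau_\varepsilon:=\min\{t\ge 0:\mathrm{osc}(f_t)\le\varepsilon\}$. *)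

(* Defs.v *)
From HB Require Import structures.
From mathcomp Require Import all_boot all_order all_algebra.
From mathcomp Require Import all_classical all_reals all_analysis.
Set Implicit Arguments. Unset Strict Implicit. Unset Printing Implicit Defensive.
Import Order.TTheory GRing.Theory Num.Theory.
Local Open Scope ring_scope.

Section EdgeAveraging.
Variables (R : realType) (V : finType).

Definition edges (e : rel V) : {set {set V}} :=
  [set A : {set V} | [exists x, exists y, e x y && (A == [set x; y])]].

(* Oscillation sup_{u,v} |f u - f v| (V finite, so a max; 0 if V empty). *)
Definition osc (f : V -> R) : R :=
  \big[Num.max/0]_(u : V) \big[Num.max/0]_(v : V) `|f u - f v|.

(* Update when the clock of edge A = {u,v} rings: both endpoints take
   the average (f u + f v)/2, other opinions are unchanged. *)
Definition avg_step (f : V -> R) (A : {set V}) : V -> R :=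
  fun x => if x \in A then (\sum_(y in A) f y) / 2 else f x.

Definition states (f0 : V -> R) (s : seq {set V}) : seq (V -> R) :=
  f0 :: scanl avg_step f0 s.

(* Realisation of the ring sequence s (up to time t) keeps the event
   {tau_eps > t}: every configuration visited has oscillation > eps. *)
Definition stays_above (eps : R) (f0 : V -> R) (s : seq {set V}) : bool :=
  all (fun g => eps < osc g) (states f0 s).

(* P(tau_eps > t) for the edge-averaging process with independent rate-one
   Poisson clocks on the edges.  By superposition, the rings of all clocks
   form a Poisson process of rate |E| whose marks are i.i.d. uniform edges;
   hence a given sequence of k rings in [0,t] (with edges s_1..s_k) has
   probability exp(-|E| t) (|E| t)^k / k! * |E|^{-k} = exp(-|E| t) t^k / k!. *)
Definition tail_prob (e : rel V) (f0 : V -> R) (eps t : R) : R :=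
  limn (fun N : nat => \sum_(0 <= k < N)
     (expR (- ((#|edges e|)%:R * t)) * t ^+ k / (k`!)%:R *
      (#|[set s : k.-tuple {set V} |
          all (fun A => A \in edges e) s && stays_above eps f0 s]|)%:R)).

End EdgeAveraging.

(* Main.v *)
Set Warnings "-all".
Require Import Defs.
From HB Require Import structures.
From mathcomp Require Import all_boot all_order all_algebra.
From mathcomp Require Import all_classical all_reals all_analysis.
From mathcomp Require Import ring lra.
Import Order.TTheory GRing.Theory Num.Theory.
Local Open Scope ring_scope.

Section Aux.
Variables (R : realType) (V : finType).
Implicit Types (f : V -> R).

Local Notation n := #|V|.

Definition meanf f : R := (\sum_v f v) / n%:R.
Definition Qf f : R := \sum_v (f v - meanf f) ^+ 2.

Lemma sum_two (F : V -> R) {x y : V} : x != y ->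
  \sum_v F v = F x + F y + \sum_(v | (v != x) && (v != y)) F v.
Proof.
move=> xy; rewrite (bigD1 x) //= (bigD1 y) /=; last by rewrite eq_sym.
by rewrite addrA.
Qed.

Lemma sum_pair (F : V -> R) x y : x != y -> \sum_(v in [set x; y]) F v = F x + F y.
Proof.
by move=> xy; rewrite big_setU1 ?big_set1 //= inE.
Qed.

Lemma step_in f x y v : x != y -> (v == x) || (v == y) ->
  avg_step f [set x; y] v = (f x + f y) / 2.
Proof. by move=> xy h; rewrite /avg_step !inE h sum_pair. Qed.

Lemma step_out f x y v : (v != x) && (v != y) -> avg_step f [set x; y] v = f v.
Proof.
by case/andP=> h1 h2; rewrite /avg_step !inE (negbTE h1) (negbTE h2).
Qed.

Lemma step_sum f x y : x != y ->
  \sum_v avg_step f [set x; y] v = \sum_v f v.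
Proof.
move=> xy; rewrite !(sum_two _ xy) (step_in f x y x) ?eqxx ?orbT //.
rewrite (step_in f x y y) ?eqxx ?orbT //.
rewrite (eq_bigr f); last by move=> v; exact: step_out.
congr (_ + _); lra.
Qed.

Lemma step_mean f x y : x != y -> meanf (avg_step f [set x; y]) = meanf f.
Proof. by move=> xy; rewrite /meanf step_sum. Qed.

Lemma Q_step f x y : x != y ->
  Qf (avg_step f [set x; y]) = Qf f - (f x - f y) ^+ 2 / 2.
Proof.
move=> xy; rewrite /Qf step_mean // !(sum_two _ xy).
rewrite (step_in f x y x) ?eqxx ?orbT // (step_in f x y y) ?eqxx ?orbT //.
rewrite (eq_bigr (fun v => (f v - meanf f) ^+ 2)); last first.
  by move=> v h; rewrite step_out.
set c := meanf f; set S := \sum_(v | _) _.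
by rewrite !expr2; field.
Qed.

End Aux.
Arguments meanf {R V}. Arguments Qf {R V}. Arguments sum_two {R V} F {x y}.
Section Aux2.
Variables (R : realType) (V : finType).
Implicit Types (f : V -> R).
Local Notation n := #|V|.

Lemma sum_sub_mean f : (0 < n)%N -> \sum_v (f v - meanf f) = 0.
Proof.
move=> n0; rewrite sumrB sumr_const /meanf -mulr_natr.
have hn : (n%:R : R) != 0 by rewrite pnatr_eq0 -lt0n.
rewrite (_ : #|_| = n) //; field; done.
Qed.

Lemma BD f a b : (0 < n)%N -> (forall v, b <= f v <= a) ->
  Qf f <= n%:R * ((a - meanf f) * (meanf f - b)).
Proof.
move=> n0 hb; rewrite /Qf; set c := meanf f.
have -> : n%:R * ((a - c) * (c - b)) =
   \sum_v ((a + b - 2 * c) * (f v - c) + (a - c) * (c - b)).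
  rewrite big_split /= -mulr_sumr sum_sub_mean // mulr0 add0r sumr_const.
  by rewrite mulr_natl.
apply: ler_sum => v _; have /andP[h1 h2] := hb v; nra.
Qed.

Lemma pair_le_Q f u v : (f u - f v) ^+ 2 <= 2 * Qf f.
Proof.
have Q0 : 0 <= Qf f by apply: sumr_ge0 => w _; exact: sqr_ge0.
case: (eqVneq u v) => [->|uv]; first by rewrite subrr expr0n /= mulr_ge0.
rewrite /Qf (sum_two _ uv).
have S0 : 0 <= \sum_(w | (w != u) && (w != v)) (f w - meanf f) ^+ 2.
  by apply: sumr_ge0 => w _; exact: sqr_ge0.
set c := meanf f; set S := \sum_(w | _) _ in S0 *.
have := sqr_ge0 (f u - c + (f v - c)); rewrite !expr2 => hh; nra.
Qed.

Lemma osc_le f eps : 0 < eps -> 2 * Qf f <= eps ^+ 2 -> osc f <= eps.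
Proof.
move=> e0 hQ; rewrite /osc; apply: bigmax_le => [|u _]; first exact: ltW.
apply: bigmax_le => [|v _]; first exact: ltW.
have h := pair_le_Q f u v.
rewrite ler_norml; apply/andP; split; nra.
Qed.

Lemma edgesP (e : rel V) A : A \in edges e -> exists x y, e x y /\ A = [set x; y].
Proof.
by rewrite inE => /existsP[x /existsP[y /andP[exy /eqP ->]]]; exists x, y.
Qed.

Lemma edges_in (e : rel V) x y : e x y -> [set x; y] \in edges e.
Proof.
move=> exy; rewrite inE; apply/existsP; exists x; apply/existsP; exists y.
by rewrite exy eqxx.
Qed.

Definition delta f A := Qf f - Qf (avg_step f A).

Lemma delta_edge (e : rel V) (e_irr : irreflexive e) f x y : e x y ->
  delta f [set x; y] = (f x - f y) ^+ 2 / 2.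
Proof.
move=> exy; have xy : x != y by apply/eqP => h; move: exy; rewrite h e_irr.
by rewrite /delta Q_step //; ring.
Qed.

Lemma delta_ge0 (e : rel V) (e_irr : irreflexive e) f A : A \in edges e -> 0 <= delta f A.
Proof.
case/edgesP => x [y [exy ->]]; rewrite (@delta_edge e e_irr f x y exy).
by rewrite divr_ge0 // sqr_ge0.
Qed.

End Aux2.
Arguments delta {R V}.
Section PathPart.
Variables (R : realType) (V : finType) (e : rel V).
Hypothesis e_irr : irreflexive e.
Implicit Types (f : V -> R).
Local Notation n := #|V|.
Local Notation E := (edges e).

Definition sp (uv : V * V) : {set V} := [set uv.1; uv.2].

Lemma telescope f x p :
  f x - f (last x p) = \sum_(uv <- pairmap pair x p) (f uv.1 - f uv.2).
Proof.
elim: p x => [|y p IH] x /=; first by rewrite big_nil subrr.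
by rewrite big_cons /= -IH; ring.
Qed.

Lemma sum_const_seq (T : Type) (r : seq T) (c : R) :
  \sum_(i <- r) c = c * (size r)%:R.
Proof.
elim: r => [|a r IH]; first by rewrite big_nil mulr0.
by rewrite big_cons IH /= -addn1 natrD; ring.
Qed.

Lemma cauchy_seq (T : Type) (r : seq T) (g : T -> R) :
  (\sum_(i <- r) g i) ^+ 2 <= (size r)%:R * \sum_(i <- r) g i ^+ 2.
Proof.
set S := \sum_(i <- r) g i; set k : R := (size r)%:R; set T2 := \sum_(i <- r) _.
case: r @S @k @T2 => [|a r] S k T2.
  by rewrite /S /k /T2 big_nil expr0n /= mul0r.
have kpos : 0 < k by rewrite /k ltr0n.
have h : \sum_(i <- a :: r) (2 * k * S * g i) <=
         \sum_(i <- a :: r) (k ^+ 2 * g i ^+ 2 + S ^+ 2).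
  apply: ler_sum => i _; have := sqr_ge0 (k * g i - S).
  by rewrite !expr2 => hh; nra.
move: h; rewrite -mulr_sumr big_split /= -mulr_sumr sum_const_seq -/k -/S -/T2.
move=> h.
have h2 : k * S ^+ 2 <= k * (k * T2) by nra.
by rewrite -(ler_pM2l kpos).
Qed.

Lemma path_edges_in x p : path e x p -> all (fun uv => e uv.1 uv.2) (pairmap pair x p).
Proof.
by elim: p x => [|y p IH] x //= /andP[exy /IH ->]; rewrite exy.
Qed.

Lemma pm_mem x p A : A \in map sp (pairmap pair x p) -> forall w, w \in A -> w \in x :: p.
Proof.
elim: p x => [|y p IH] x //=.
rewrite inE => /orP[/eqP -> w|/IH h w /h]; last by rewrite !inE => ->; rewrite orbT.
by rewrite /sp /= !inE => /orP[->|->] //; rewrite orbT.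
Qed.

Lemma pm_uniq x p : uniq (x :: p) -> uniq (map sp (pairmap pair x p)).
Proof.
elim: p x => [|y p IH] x //=.
case/andP => hx /andP[hy hu]; rewrite IH /= ?hy // andbT.
apply/negP => /pm_mem /(_ x); rewrite /sp !inE eqxx => /(_ isT).
by move: hx; rewrite !inE => /negbTE ->.
Qed.

Lemma path_bound f x p : path e x p -> uniq (x :: p) ->
  (f x - f (last x p)) ^+ 2 <= (size p)%:R * (2 * \sum_(A in E) delta f A).
Proof.
move=> hp hu; rewrite telescope.
apply: le_trans (cauchy_seq _ _ _) _; rewrite size_pairmap.
apply: ler_wpM2l => //.
have hall := @path_edges_in x p hp.
rewrite (eq_big_seq (fun uv => 2 * delta f (sp uv))); last first.
  move=> uv huv; have := allP hall uv huv => /= euv.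
  by rewrite /sp (@delta_edge R V e e_irr f _ _ euv); field.
rewrite -mulr_sumr; apply: ler_wpM2l => //.
rewrite -(big_map sp xpredT (delta f)) big_uniq; last exact: pm_uniq.
rewrite [leRHS]big_mkcond [leLHS]big_mkcond; apply: ler_sum => A _.
case: ifP => hA.
  have -> : A \in E.
    case/mapP: hA => uv huv ->; have := allP hall uv huv => /= euv.
    exact: edges_in.
  by [].
by case: ifP => // hE; exact: (@delta_ge0 R V e e_irr f A hE).
Qed.

Lemma ex_max (g : V -> R) (x0 : V) : exists xM, forall v, g v <= g xM.
Proof. by case: (@arg_maxP _ _ V x0 xpredT g isT) => i _ H; exists i => v; exact: H. Qed.

Lemma poincare f : (0 < n)%N -> (forall x y, connect e x y) ->
  Qf f <= (n%:R) ^+ 2 / 2 * \sum_(A in E) delta f A.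
Proof.
move=> n0 conn; case/card_gt0P: (n0) => x0 _.
have [xM hM] := ex_max f x0.
have [xm hm] := ex_max (fun v => - f v) x0.
have hb : forall v, f xm <= f v <= f xM.
  by move=> v; rewrite hM andbT -lerN2 hm.
have hQ := @BD R V f _ _ n0 hb.
set a := f xM in hQ hb *; set b := f xm in hQ hb *; set c := meanf f in hQ.
have hD : 0 <= \sum_(A in E) delta f A.
  by apply: sumr_ge0 => A hA; exact: (@delta_ge0 R V e e_irr f A hA).
set D := \sum_(A in E) delta f A in hD *.
have [p hp hl] := connectP (conn xM xm).
move: hl; case: (shortenP hp) => p' hp' hu _ hl'.
have hpb := @path_bound f _ _ hp' hu; rewrite -hl' -/a -/b -/D in hpb.
have hs : ((size p')%:R : R) <= n%:R.
  rewrite ler_nat; have hh := card_uniqP hu.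
  apply: (@leq_trans (size (xM :: p'))) => //.
  by rewrite -hh max_card.
have hab : (a - c) * (c - b) <= (a - b) ^+ 2 / 4.
  have := sqr_ge0 (a + b - 2 * c); rewrite !expr2 => hh; nra.
have h1 : Qf f <= n%:R * ((a - b) ^+ 2 / 4).
  apply: le_trans hQ _; exact: ler_wpM2l.
have h2 : (a - b) ^+ 2 <= n%:R * (2 * D).
  apply: le_trans hpb _; apply: ler_wpM2r => //; rewrite mulr_ge0 //.
apply: le_trans h1 _.
have nn : (0 : R) <= n%:R by [].
set N := (n%:R : R) in nn h2 *.
have : N * (a - b) ^+ 2 <= N * (N * (2 * D)) by exact: ler_wpM2l.
move=> hh; rewrite expr2; lra.
Qed.

End PathPart.
Section MainPart.
Variables (R : realType) (V : finType) (e : rel V).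
Hypothesis e_irr : irreflexive e.
Implicit Types (f : V -> R).
Local Notation n := #|V|.
Local Notation E := (edges e).

Lemma sum_tupleS (T : finType) k (F : k.+1.-tuple T -> R) :
  \sum_(s : k.+1.-tuple T) F s =
  \sum_(x : T) \sum_(s : k.-tuple T) F [tuple of x :: s].
Proof.
rewrite pair_big /=.
rewrite (reindex (fun p : T * k.-tuple T => [tuple of p.1 :: p.2])) /=.
  by apply: eq_bigl.
exists (fun s => (thead s, [tuple of behead s])) => [[x s] _|s _] /=.
  by congr pair; apply: val_inj.
by case: s => -[|y l] h //; apply: val_inj.
Qed.

Lemma sum_tuple0 (T : finType) (F : 0.-tuple T -> R) :
  \sum_(s : 0.-tuple T) F s = F [tuple].
Proof. by rewrite (big_pred1 [tuple]) // => s; apply/esym/eqP; exact: tuple0. Qed.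

Definition sQ k f := \sum_(s : k.-tuple {set V} | all (fun A => A \in E) s)
   Qf (foldl (@avg_step R V) f s).

Lemma Qf_ge0 f : 0 <= Qf f.
Proof. by apply: sumr_ge0 => w _; exact: sqr_ge0. Qed.

Lemma sQ_le a k f : 0 <= a ->
  (forall g, \sum_(A in E) Qf (avg_step g A) <= a * Qf g) ->
  sQ k f <= a ^+ k * Qf f.
Proof.
move=> a0 hstep; elim: k f => [|k IH] f.
  by rewrite /sQ big_mkcond sum_tuple0 /= expr0 mul1r.
rewrite /sQ big_mkcond sum_tupleS /=.
rewrite (eq_bigr (fun x => if x \in E then sQ k (avg_step f x) else 0)); last first.
  move=> x _; case: (x \in E) => /=; first by rewrite /sQ [RHS]big_mkcond.
  by rewrite big1_eq.
rewrite -big_mkcond /=.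
have h1 : \sum_(x in E) sQ k (avg_step f x) <= \sum_(x in E) a ^+ k * Qf (avg_step f x).
  by apply: ler_sum => x _; exact: IH.
apply: le_trans h1 _.
rewrite -mulr_sumr exprS (mulrC a) -mulrA.
apply: ler_wpM2l; first exact: exprn_ge0.
exact: hstep.
Qed.

Lemma step_bound f : (1 < n)%N -> (forall x y, connect e x y) ->
  \sum_(A in E) Qf (avg_step f A) <= (#|E|%:R - 2 / n%:R ^+ 2) * Qf f.
Proof.
move=> n1 conn.
rewrite (eq_bigr (fun A => Qf f - delta f A)); last by move=> A _; rewrite /delta; ring.
rewrite sumrB sumr_const.
have hp := @poincare R V e e_irr f (ltnW n1) conn.
set D := \sum_(A in E) delta f A in hp *.
have nn : (0 : R) < n%:R ^+ 2 by rewrite exprn_gt0 // ltr0n ltnW.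
have h2 : 0 <= 2 / n%:R ^+ 2 :> R by rewrite divr_ge0 // ltW.
have := ler_wpM2l h2 hp; rewrite mulrA.
have -> : 2 / n%:R ^+ 2 * (n%:R ^+ 2 / 2) = 1 :> R.
  by field; rewrite pnatr_eq0 -lt0n ltnW.
rewrite mul1r => hh.
rewrite -[Qf f *+ _]mulr_natl.
have -> : (#|E|%:R - 2 / n%:R ^+ 2) * Qf f = #|E|%:R * Qf f - 2 / n%:R ^+ 2 * Qf f by ring.
lra.
Qed.

Lemma stays_final eps f s : stays_above eps f s -> eps < osc (foldl (@avg_step R V) f s).
Proof.
elim: s f => [|A s IH] f; first by rewrite /stays_above /states /= andbT.
by rewrite /stays_above /states /= => /andP[_ h]; exact: IH.
Qed.

Lemma count_le eps k f : 0 < eps ->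
  (#|[set s : k.-tuple {set V} | all (fun A => A \in E) s && stays_above eps f s]|)%:R
    <= 2 / eps ^+ 2 * sQ k f.
Proof.
move=> heps; rewrite -sum1_card natr_sum /sQ mulr_sumr.
rewrite big_mkcond [leRHS]big_mkcond; apply: ler_sum => s _; rewrite inE.
case: ifP => [/andP[h1 h2]|_].
  rewrite h1; have hst := @stays_final _ _ _ h2.
  set Q := Qf _ in hst *.
  have hlt : eps ^+ 2 < 2 * Q.
    rewrite ltNge; apply/negP => hle.
    by have := @osc_le R V _ _ heps hle; rewrite leNgt hst.
  have -> : 2 / eps ^+ 2 * Q = (2 * Q) / eps ^+ 2 by rewrite mulrAC.
  by rewrite ler_pdivlMr ?exprn_gt0 // mul1r ltW.
case: ifP => _ //.
by rewrite mulr_ge0 ?Qf_ge0 // divr_ge0 // sqr_ge0.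
Qed.

End MainPart.
Lemma Q0_le (R : realType) (V : finType) (f : V -> R) : (0 < #|V|)%N ->
  (forall v, -1 <= f v <= 1) -> Qf f <= #|V|%:R.
Proof.
move=> n0 hf; have h := @BD R V f 1 (-1) n0 hf.
apply: le_trans h _; rewrite -[leRHS]mulr1; apply: ler_wpM2l => //.
set c := meanf f; have := sqr_ge0 c; rewrite expr2 => hc; nra.
Qed.

Lemma lim_bound (R : realType) (c : nat -> R) (C x : R) : 0 <= x -> 0 <= C ->
  (forall k, 0 <= c k) -> (forall k, c k <= C * exp_coeff x k) ->
  limn (fun N => \sum_(0 <= k < N) c k) <= C * expR x.
Proof.
move=> x0 C0 c0 hc.
have hb : forall N, \sum_(0 <= k < N) c k <= C * expR x.
  move=> N; have h1 : \sum_(0 <= k < N) c k <= C * series (exp_coeff x) N.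
    by rewrite /series /= mulr_sumr; apply: ler_sum => k _; exact: hc.
  apply: le_trans h1 _; apply: ler_wpM2l => //.
  apply: (nondecreasing_cvgn_le _ (is_cvg_series_exp_coeff x) N).
  apply: nondecreasing_series => k _ _.
  by rewrite /exp_coeff /= divr_ge0 // exprn_ge0.
have nd : nondecreasing_seq (fun N => \sum_(0 <= k < N) c k).
  by apply: nondecreasing_series => k _ _; exact: c0.
have cv : cvgn (fun N => \sum_(0 <= k < N) c k).
  apply: nondecreasing_is_cvgn nd _.
  by exists (C * expR x) => _ [N _ <-]; exact: hb.
by apply: limr_le cv _; exact: nearW.
Qed.

Theorem proposition3p1 (R : realType) (V : finType) (e : rel V)
  (e_sym : symmetric e) (e_irr : irreflexive e)
  (e_conn : forall x y : V, connect e x y)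
  (f0 : V -> R) (hf0 : forall v, -1 <= f0 v <= 1)
  (eps t : R) (heps : 0 < eps) (ht : 0 < t) :
  tail_prob e f0 eps t <=
    (2 * (#|V|)%:R) / eps ^+ 2 * expR (- (2 * t) / (#|V|)%:R ^+ 2).
Proof.
have rhs0 : 0 <= (2 * (#|V|)%:R) / eps ^+ 2 * expR (- (2 * t) / (#|V|)%:R ^+ 2).
  by rewrite mulr_ge0 ?expR_ge0 // divr_ge0 // sqr_ge0.
case: (leqP #|V| 1) => hn.
  have huv : forall u v : V, u = v.
    move=> u v; move/card_le1P: hn => h1.
    by have := h1 u isT v; rewrite inE /= => /esym/eqP.
  have osc0 : osc f0 <= 0.
    rewrite /osc; apply: bigmax_le => // u _; apply: bigmax_le => // v _.
    by rewrite (huv u v) subrr normr0.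
  rewrite /tail_prob.
  have -> : (fun N : nat => \sum_(0 <= k < N)
     (expR (- ((#|edges e|)%:R * t)) * t ^+ k / (k`!)%:R *
      (#|[set s : k.-tuple {set V} |
          all (fun A => A \in edges e) s && stays_above eps f0 s]|)%:R)) =
     (fun _ => 0).
    apply/funext => N; apply: big1 => k _.
    have -> : #|[set s : k.-tuple {set V} |
          all (fun A => A \in edges e) s && stays_above eps f0 s]| = 0%N.
      apply/eqP; rewrite cards_eq0; apply/eqP/setP => s; rewrite !inE.
      rewrite /stays_above /states /=.
      by rewrite (_ : (eps < osc f0) = false) ?andbF //; apply/negbTE; rewrite -leNgt (le_trans osc0) // ltW.
    by rewrite mulr0.
  by rewrite lim_cst.
set m := #|edges e|.
have n0 : (0 < #|V|)%N by apply: ltnW.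
have m1 : (0 < m)%N.
  case/card_gt1P: hn => x [y [_ _ xy]].
  case/connectP: (e_conn x y) => p hp hl.
  case: p hp hl => [|z p] /=; first by move=> _ h; rewrite h eqxx in xy.
  case/andP => exz _ _; apply/card_gt0P; exists [set x; z]; exact: edges_in.
set a : R := m%:R - 2 / (#|V|)%:R ^+ 2.
have n2 : (2 : R) <= (#|V|)%:R by rewrite ler_nat.
have m1' : (1 : R) <= m%:R by rewrite ler1n.
have a0 : 0 <= a.
  rewrite /a subr_ge0 ler_pdivrMr; last by rewrite exprn_gt0 // ltr0n.
  rewrite expr2; nra.
have hstep := fun g => @step_bound R V e e_irr g hn e_conn.
have hNk : forall k, (#|[set s : k.-tuple {set V} |
          all (fun A => A \in edges e) s && stays_above eps f0 s]|)%:R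
          <= 2 / eps ^+ 2 * (a ^+ k * (#|V|)%:R).
  move=> k; apply: le_trans (@count_le R V e eps k f0 heps) _.
  apply: ler_wpM2l; first by rewrite divr_ge0 // sqr_ge0.
  apply: le_trans (@sQ_le R V e a k f0 a0 hstep) _.
  apply: ler_wpM2l; first exact: exprn_ge0.
  exact: Q0_le.
set C := expR (- (m%:R * t)) * (2 * (#|V|)%:R / eps ^+ 2).
have C0 : 0 <= C by rewrite mulr_ge0 ?expR_ge0 // divr_ge0 // sqr_ge0.
rewrite /tail_prob -/m.
apply: le_trans.
  apply: (@lim_bound R _ C (t * a)) => //.
  - by rewrite mulr_ge0 // ltW.
  - by move=> k; rewrite !mulr_ge0 ?expR_ge0 ?exprn_ge0 ?invr_ge0 ?ler0n ?ltW.
  - move=> k; have hk := hNk k.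
    set N := (#|_|)%:R in hk *.
    rewrite /C /exp_coeff /=.
    have f0' : 0 <= expR (- (m%:R * t)) * t ^+ k / (k`!)%:R.
      by rewrite !mulr_ge0 ?expR_ge0 ?exprn_ge0 ?invr_ge0 ?ler0n ?ltW.
    apply: le_trans (ler_wpM2l f0' hk) _.
    rewrite exprMn le_eqVlt; apply/orP; left; apply/eqP; ring.
rewrite /C mulrAC -expRD.
have -> : - (m%:R * t) + t * a = - (2 * t) / (#|V|)%:R ^+ 2.
  rewrite /a; field.
  by rewrite pnatr_eq0 -lt0n.
by rewrite mulrC.
Qed.
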